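(* Let $\gamma\in V$ and let $A\subset S^1$ be a closed subset with $A\neq S^1$. Then there exists $g\in V$ such that $A$ is weakly $\gamma^g$-wandering, where $\gamma^g=g^{-1}\gamma g$.
   Context: $S^1$ is the interval $[0,1]$ with $0$ and $1$ identified. Thompson's group $V$ is the group of left-continuous bijections of $S^1$ which map finite dyadic fractions to finite dyadic fractions, are differentiable except at finitely many finite dyadic fractions, and on each maximal interval of differentiability are linear with slope an integer power of $2$. For $\gamma\in V$, a subset $U\subseteq S^1$ is weakly $\gamma$-wandering if for every $n\in\mathbb{Z}$, either $\gamma^n$ fixes $U$ pointwise or $\gamma^n(U)\cap U=\emptyset$. *)

(* Defs.v *)
From Stdlib Require Import Reals Lra Lia ZArith ClassicalEpsilon.
Open Scope R_scope.

(* The circle S^1 = [0,1] with 0 ~ 1, represented by the half-open interval (0,1]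
   (the point 0 = 1 is represented by 1). *)
Definition S1 (x : R) : Prop := 0 < x <= 1.

Definition dyadic (x : R) : Prop := exists (m : Z) (k : nat), x = IZR m / 2 ^ k.

(* Elements of Thompson's group V, as maps R -> R whose restriction to (0,1]
   is the circle map.  Left-continuous, piecewise linear with slopes powers of 2
   and finitely many dyadic breakpoints: on each (a_i, a_(i+1)] of a dyadic
   subdivision 0 = a_0 < ... < a_n = 1 the map is affine with slope 2^k_i. *)
Definition in_V (f : R -> R) : Prop :=
  (forall x, S1 x -> S1 (f x)) /\
  (forall x y, S1 x -> S1 y -> f x = f y -> x = y) /\
  (forall y, S1 y -> exists x, S1 x /\ f x = y) /\
  (forall x, S1 x -> dyadic x -> dyadic (f x)) /\
  exists (n : nat) (a : nat -> R),
    a 0%nat = 0 /\ a n = 1 /\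
    (forall i, (i < n)%nat -> a i < a (S i)) /\
    (forall i, (i <= n)%nat -> dyadic (a i)) /\
    (forall i, (i < n)%nat -> exists (k : Z) (c : R),
        forall x, a i < x <= a (S i) -> f x = powerRZ 2 k * x + c).

Definition circ_inv (f : R -> R) (y : R) : R :=
  epsilon (inhabits 1) (fun x => S1 x /\ f x = y).

Definition powZ (f : R -> R) (n : Z) (x : R) : R :=
  match n with
  | Z0 => x
  | Zpos p => Nat.iter (Pos.to_nat p) f x
  | Zneg p => Nat.iter (Pos.to_nat p) (circ_inv f) x
  end.

Definition conjV (gamma g : R -> R) : R -> R :=
  fun x => circ_inv g (gamma (g x)).

Definition cdist (x y : R) : R := Rmin (Rabs (x - y)) (1 - Rabs (x - y)).

Definition circle_closed (A : R -> Prop) : Prop :=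
  (forall x, A x -> S1 x) /\
  (forall x, S1 x -> (forall eps, eps > 0 -> exists y, A y /\ cdist x y < eps) -> A x).

Definition weakly_wandering (gamma : R -> R) (U : R -> Prop) : Prop :=
  forall n : Z,
    (forall x, U x -> powZ gamma n x = x) \/
    (forall x, U x -> ~ U (powZ gamma n x)).

(* Main.v *)
Require Import Defs.
From Stdlib Require Import Reals Lra Lia ZArith ClassicalEpsilon Classical List.
Open Scope R_scope.

Definition P (z : Z) : R := powerRZ 2 z.

Lemma P_pos z : 0 < P z.
Proof. unfold P; apply powerRZ_lt; lra. Qed.

Lemma P_add a b : P (a + b) = P a * P b.
Proof. unfold P; apply powerRZ_add; lra. Qed.

Lemma P_0 : P 0 = 1.
Proof. reflexivity. Qed.

Lemma P_1 : P 1 = 2.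
Proof. unfold P; simpl; lra. Qed.

Lemma P_IZR z : (0 <= z)%Z -> P z = IZR (2 ^ z).
Proof.
  intro Hz. pattern z; apply natlike_ind; auto.
  - intros x Hx IH. rewrite Z.pow_succ_r by lia. rewrite mult_IZR.
    unfold Z.succ. rewrite P_add, IH, P_1. lra.
Qed.

Lemma pow2_pos z : (0 <= z)%Z -> (0 < 2 ^ z)%Z.
Proof. intros; apply Z.pow_pos_nonneg; lia. Qed.

Lemma pow2_ge2 z : (1 <= z)%Z -> (2 <= 2 ^ z)%Z.
Proof.
  intros. replace z with (Z.succ (z - 1)) by lia. rewrite Z.pow_succ_r by lia.
  pose proof (pow2_pos (z-1)); lia.
Qed.

Lemma P_ge1 z : (0 <= z)%Z -> 1 <= P z.
Proof. intros; rewrite P_IZR by auto. apply IZR_le. pose proof (pow2_pos z H); lia. Qed.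

Lemma P_ge2 z : (1 <= z)%Z -> 2 <= P z.
Proof. intros; rewrite P_IZR by lia. apply IZR_le. pose proof (pow2_ge2 z H); lia. Qed.

Lemma P_le a b : (a <= b)%Z -> P a <= P b.
Proof.
  intros. replace b with (a + (b - a))%Z by lia. rewrite P_add.
  pose proof (P_ge1 (b-a) ltac:(lia)). pose proof (P_pos a). nra.
Qed.

Lemma P_lt a b : (a < b)%Z -> P a < P b.
Proof.
  intros. replace b with (a + (b - a))%Z by lia. rewrite P_add.
  pose proof (P_ge2 (b-a) ltac:(lia)). pose proof (P_pos a). nra.
Qed.

Lemma P_lt_inv a b : P a < P b -> (a < b)%Z.
Proof. intros. destruct (Z_lt_le_dec a b); auto. apply P_le in l. lra. Qed.

Lemma P_le_inv a b : P a <= P b -> (a <= b)%Z.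
Proof. intros. destruct (Z_lt_le_dec b a); try lia. apply P_lt in l. lra. Qed.

Lemma P_inj a b : P a = P b -> a = b.
Proof. intros. apply Z.le_antisymm; apply P_le_inv; lra. Qed.

Lemma lt_real_Z a b u : 0 < u -> IZR a * u < IZR b * u -> (a < b)%Z.
Proof. intros. apply lt_IZR. nra. Qed.

Lemma le_real_Z a b u : 0 < u -> IZR a * u <= IZR b * u -> (a <= b)%Z.
Proof. intros. apply le_IZR. nra. Qed.

Definition I (e j : Z) (y : R) : Prop := IZR j * P e < y <= (IZR j + 1) * P e.

Definition inS1 (e j : Z) : Prop := (0 <= j)%Z /\ (IZR j + 1) * P e <= 1.

Lemma inS1_S1 e j y : inS1 e j -> I e j y -> S1 y.
Proof.
  unfold inS1, I, S1; intros [H1 H2] [H3 H4]. apply IZR_le in H1.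
  pose proof (P_pos e). split; nra.
Qed.

Lemma I_right e j : I e j ((IZR j + 1) * P e).
Proof. unfold I. pose proof (P_pos e); split; lra. Qed.

Lemma S1_inS1 e j : (forall y, I e j y -> S1 y) -> inS1 e j.
Proof.
  intros H. pose proof (H _ (I_right e j)) as [H1 H2]. split; auto.
  pose proof (P_pos e).
  assert (0 < IZR (j + 1)) by (rewrite plus_IZR; nra). apply lt_IZR in H3. lia.
Qed.

Definition Sub e2 j2 e j := forall y, I e2 j2 y -> I e j y.

Lemma P_split e e2 : (e2 <= e)%Z -> P e = IZR (2 ^ (e - e2)) * P e2.
Proof. intros. rewrite <- P_IZR by lia. rewrite <- P_add. f_equal; lia. Qed.

Lemma inter_int e j e2 j2 : (e2 <= e)%Z ->
  (exists y, I e j y /\ I e2 j2 y) ->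
  (j * 2 ^ (e - e2) <= j2 /\ j2 + 1 <= (j + 1) * 2 ^ (e - e2))%Z.
Proof.
  intros He [y [[H1 H2] [H3 H4]]]. rewrite (P_split e e2 He) in H1, H2.
  set (M := (2 ^ (e - e2))%Z) in *. pose proof (P_pos e2).
  split.
  - assert (j * M < j2 + 1)%Z; [|lia].
    apply (lt_real_Z _ _ (P e2)); auto. rewrite mult_IZR, plus_IZR. simpl. nra.
  - assert (j2 < (j + 1) * M)%Z; [|lia].
    apply (lt_real_Z _ _ (P e2)); auto. rewrite mult_IZR, plus_IZR. simpl. nra.
Qed.

Lemma int_sub e j e2 j2 : (e2 <= e)%Z ->
  (j * 2 ^ (e - e2) <= j2 /\ j2 + 1 <= (j + 1) * 2 ^ (e - e2))%Z -> Sub e2 j2 e j.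
Proof.
  intros He [H1 H2] y [H3 H4]. unfold I. rewrite (P_split e e2 He).
  set (M := (2 ^ (e - e2))%Z) in *. pose proof (P_pos e2).
  apply IZR_le in H1. apply IZR_le in H2. rewrite mult_IZR in H1, H2.
  rewrite plus_IZR in H2. rewrite plus_IZR in H2. simpl in H2.
  split; nra.
Qed.

Lemma nested e j e2 j2 : (e2 <= e)%Z ->
  (exists y, I e j y /\ I e2 j2 y) -> Sub e2 j2 e j.
Proof. intros. apply int_sub; auto. apply inter_int; auto. Qed.

Lemma Sub_level e2 j2 e j : Sub e2 j2 e j -> (e2 <= e)%Z.
Proof.
  intros HS. destruct (Z_le_gt_dec e2 e) as [|Hlt]; auto. exfalso.
  assert (He : (e <= e2)%Z) by lia.
  pose proof (HS _ (I_right e2 j2)) as Hr.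
  pose proof (inter_int e2 j2 e j He (ex_intro _ _ (conj (I_right e2 j2) Hr))) as [H1 H2].
  set (y := (IZR j2 + /2) * P e2).
  assert (Hy : I e2 j2 y) by (unfold I, y; pose proof (P_pos e2); split; nra).
  apply HS in Hy. unfold I, y in Hy. rewrite (P_split e2 e He) in Hy.
  pose proof (pow2_ge2 (e2 - e) ltac:(lia)).
  set (M := (2 ^ (e2 - e))%Z) in *. pose proof (P_pos e).
  apply IZR_le in H1, H2, H. rewrite mult_IZR in H1, H2. rewrite !plus_IZR in H2.
  simpl in H2. destruct Hy as [Hy1 Hy2].
  assert (IZR j < (IZR j2 + / 2) * IZR M).
  { apply (Rmult_lt_reg_r (P e)); auto. lra. }
  assert ((IZR j2 + 1) * IZR M <= IZR j + 1).
  { destruct Hr as [_ Hr]. rewrite (P_split e2 e He) in Hr. fold M in Hr.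
    apply (Rmult_le_reg_r (P e)); auto. lra. }
  lra.
Qed.

Lemma Sub_int e2 j2 e j : Sub e2 j2 e j ->
  (e2 <= e)%Z /\ (j * 2 ^ (e - e2) <= j2 /\ j2 + 1 <= (j + 1) * 2 ^ (e - e2))%Z.
Proof.
  intros HS. pose proof (Sub_level _ _ _ _ HS). split; auto.
  apply inter_int; auto. exists ((IZR j2 + 1) * P e2). split; auto. apply HS, I_right.
  apply I_right.
Qed.

Lemma same_level e j j2 : (exists y, I e j y /\ I e j2 y) -> j = j2.
Proof.
  intros H. pose proof (inter_int e j e j2 (Z.le_refl _) H). rewrite Z.sub_diag in H0.
  simpl in H0. lia.
Qed.

Lemma Sub_inS1 e2 j2 e j : Sub e2 j2 e j -> inS1 e j -> inS1 e2 j2.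
Proof. intros. apply S1_inS1. intros. eapply inS1_S1; eauto. Qed.

Lemma Sub_refl e j : Sub e j e j.
Proof. unfold Sub; auto. Qed.

Lemma Sub_trans a b c d e f : Sub a b c d -> Sub c d e f -> Sub a b e f.
Proof. unfold Sub; auto. Qed.

Lemma half_disj e j y : I (e - 1) (2 * j) y -> I (e - 1) (2 * j + 1) y -> False.
Proof. unfold I; intros. rewrite plus_IZR, mult_IZR in *. simpl in *. lra. Qed.

Lemma half_sub e j b : (b = 0 \/ b = 1)%Z -> Sub (e - 1) (2 * j + b) e j.
Proof.
  intros Hb. apply int_sub; [lia|]. replace (e - (e - 1))%Z with 1%Z by lia. rewrite Z.pow_1_r. lia.
Qed.

Definition Maps (f : R -> R) (i : nat) (e j e' j' : Z) : Prop :=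
  forall x, I e j x -> Nat.iter i f x = P (e' - e) * x + (IZR j' - IZR j) * P e'.

Lemma P_shift e e' : P (e' - e) * P e = P e'.
Proof. rewrite <- P_add. f_equal; lia. Qed.

Lemma Maps_into f i e j e' j' x : Maps f i e j e' j' -> I e j x -> I e' j' (Nat.iter i f x).
Proof.
  intros HM Hx. rewrite (HM x Hx). destruct Hx as [H1 H2]. pose proof (P_shift e e').
  pose proof (P_pos (e' - e)). unfold I. split.
  - apply (Rmult_lt_compat_l (P (e' - e))) in H1; auto. nra.
  - apply (Rmult_le_compat_l (P (e' - e))) in H2; [|lra]. nra.
Qed.

Lemma Maps_onto f i e j e' j' y : Maps f i e j e' j' -> I e' j' y ->
  exists x, I e j x /\ Nat.iter i f x = y.
Proof.
  intros HM [H1 H2]. pose proof (P_shift e e'). pose proof (P_pos (e' - e)).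
  set (x := (y - (IZR j' - IZR j) * P e') / P (e' - e)).
  assert (Hx : P (e' - e) * x = y - (IZR j' - IZR j) * P e') by (unfold x; field; lra).
  assert (I e j x).
  { unfold I. pose proof (P_pos e). split.
    - apply (Rmult_lt_reg_l (P (e' - e))); auto. nra.
    - apply (Rmult_le_reg_l (P (e' - e))); auto. nra. }
  exists x. split; auto. rewrite (HM x H3). lra.
Qed.

Lemma Maps_0 f e j : Maps f 0 e j e j.
Proof. intros x _. simpl. rewrite Z.sub_diag, P_0. lra. Qed.

Lemma Maps_comp f i i' e j e1 j1 e2 j2 :
  Maps f i e j e1 j1 -> Maps f i' e1 j1 e2 j2 -> Maps f (i' + i) e j e2 j2.
Proof.
  intros H1 H2 x Hx. rewrite Nat.iter_add. rewrite (H2 _ (Maps_into _ _ _ _ _ _ _ H1 Hx)).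
  rewrite (H1 x Hx).
  replace (e2 - e)%Z with ((e2 - e1) + (e1 - e))%Z by lia. rewrite P_add.
  pose proof (P_shift e1 e2). rewrite <- H. ring.
Qed.

Lemma Maps_sub f i e j e' j' e2 j2 : Maps f i e j e' j' -> Sub e2 j2 e j ->
  Maps f i e2 j2 (e2 + (e' - e)) (j2 + (j' - j) * 2 ^ (e - e2)).
Proof.
  intros HM HS. pose proof (Sub_level _ _ _ _ HS) as He.
  intros x Hx; rewrite (HM x (HS x Hx)).
  replace (e2 + (e' - e) - e2)%Z with (e' - e)%Z by lia.
  rewrite plus_IZR, mult_IZR, <- P_IZR by lia.
  replace (IZR j2 + IZR (j' - j) * P (e - e2) - IZR j2) with (IZR (j' - j) * P (e - e2)) by ring.
  rewrite Rmult_assoc, <- P_add. replace (e - e2 + (e2 + (e' - e)))%Z with e' by lia.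
  rewrite minus_IZR. ring.
Qed.

Lemma Maps_pull f i e j e' j' e2' j2' : Maps f i e j e' j' -> Sub e2' j2' e' j' ->
  exists e2 j2, Sub e2 j2 e j /\ Maps f i e2 j2 e2' j2'.
Proof.
  intros HM HS. destruct (Sub_int _ _ _ _ HS) as [He [H1 H2]].
  set (t := (e' - e2')%Z) in *. set (M := (2 ^ t)%Z) in *.
  exists (e + (e2' - e'))%Z, (j2' - (j' - j) * M)%Z.
  assert (HS2 : Sub (e + (e2' - e')) (j2' - (j' - j) * M) e j).
  { apply int_sub; [lia|]. replace (e - (e + (e2' - e')))%Z with t by (unfold t; lia).
    fold M. lia. }
  split; auto.
  pose proof (Maps_sub _ _ _ _ _ _ _ _ HM HS2).
  replace (e + (e2' - e') + (e' - e))%Z with e2' in H by lia.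
  replace (e - (e + (e2' - e')))%Z with t in H by (unfold t; lia). fold M in H.
  replace (j2' - (j' - j) * M + (j' - j) * M)%Z with j2' in H by lia. auto.
Qed.

Lemma inS1_le0 e j : inS1 e j -> (e <= 0)%Z.
Proof.
  intros [H1 H2]. apply P_le_inv. rewrite P_0. apply IZR_le in H1. pose proof (P_pos e). nra.
Qed.

Lemma P_opp e : P (- e) * P e = 1.
Proof. rewrite <- P_add. replace (- e + e)%Z with 0%Z by lia. apply P_0. Qed.

Lemma contain e x : (e <= 0)%Z -> S1 x -> exists h, I e h x /\ inS1 e h.
Proof.
  intros He [Hx1 Hx2]. set (z := x * P (- e)). pose proof (P_opp e). pose proof (P_pos e).
  pose proof (P_pos (- e)).
  destruct (archimed (- z)) as [A1 A2]. set (h := (- up (- z))%Z).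
  assert (Hh1 : IZR h < z) by (unfold h; rewrite opp_IZR; lra).
  assert (Hh2 : z <= IZR h + 1) by (unfold h; rewrite opp_IZR; lra).
  exists h. assert (I e h x).
  { assert (E1 : IZR h * P e * P (- e) = IZR h) by (rewrite Rmult_assoc, (Rmult_comm (P e)), H; ring).
    assert (E2 : (IZR h + 1) * P e * P (- e) = IZR h + 1) by (rewrite Rmult_assoc, (Rmult_comm (P e)), H; ring).
    unfold I. split.
    - apply (Rmult_lt_reg_r (P (-e))); auto. rewrite E1. unfold z in Hh1. lra.
    - apply (Rmult_le_reg_r (P (-e))); auto. rewrite E2. unfold z in Hh2. lra. }
  split; auto. split.
  - assert (- 1 < h)%Z; [|lia]. apply lt_IZR. assert (0 < z) by (unfold z; nra). lra.
  - assert (h + 1 <= 2 ^ (- e))%Z.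
    { assert (h < 2 ^ (- e))%Z; [|lia]. apply lt_IZR. rewrite <- P_IZR by lia.
      assert (z <= P (- e)) by (unfold z; nra). lra. }
    apply IZR_le in H3. rewrite plus_IZR, <- P_IZR in H3 by lia. simpl in H3. nra.
Qed.

Lemma contain_level e j e0 : inS1 e j -> (e <= e0)%Z -> (e0 <= 0)%Z ->
  exists h, Sub e j e0 h /\ inS1 e0 h.
Proof.
  intros Hs He He0. destruct (contain e0 ((IZR j + 1) * P e) He0) as [h [Hh1 Hh2]].
  { eapply inS1_S1; eauto. apply I_right. }
  exists h. split; auto. apply nested; auto. eexists; split; eauto. apply I_right.
Qed.

Definition LF (f : R -> R) (N : Z) : Prop :=
  forall j0, inS1 (- N) j0 -> exists k C, forall x, I (- N) j0 x ->
    f x = P k * x + IZR C * P (k - N).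

Definition mapsS1 (f : R -> R) := forall x, S1 x -> S1 (f x).

Lemma iter_S1 f n x : mapsS1 f -> S1 x -> S1 (Nat.iter n f x).
Proof. intros Hf Hx. induction n; simpl; auto. Qed.

Lemma Maps_inS1 f i e j e' j' : mapsS1 f -> Maps f i e j e' j' -> inS1 e j -> inS1 e' j'.
Proof.
  intros Hf HM Hs. apply S1_inS1. intros y Hy. destruct (Maps_onto _ _ _ _ _ _ _ HM Hy) as [x [Hx <-]].
  apply iter_S1; auto. eapply inS1_S1; eauto.
Qed.

Lemma LF_step f N e j : (0 <= N)%Z -> LF f N -> inS1 e j -> (e <= - N)%Z ->
  exists k C, (forall x, I e j x -> f x = P k * x + IZR C * P (k - N)) /\
    Maps f 1 e j (e + k) (j + C * 2 ^ (- N - e)).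
Proof.
  intros HN HL Hs He. destruct (contain_level e j (- N) Hs He ltac:(lia)) as [j0 [HS Hj0]].
  destruct (HL j0 Hj0) as [k [C HC]]. exists k, C.
  assert (HF : forall x, I e j x -> f x = P k * x + IZR C * P (k - N)) by (intros; apply HC, HS; auto).
  split; auto. intros x Hx. simpl. rewrite HF by auto.
  replace (e + k - e)%Z with k by lia. rewrite plus_IZR, mult_IZR, <- P_IZR by lia.
  replace (IZR j + IZR C * P (- N - e) - IZR j) with (IZR C * P (- N - e)) by ring.
  rewrite Rmult_assoc, <- P_add. replace (- N - e + (e + k))%Z with (k - N)%Z by lia. ring.
Qed.

Definition injS1 (f : R -> R) := forall x y, S1 x -> S1 y -> f x = f y -> x = y.
Definition surjS1 (f : R -> R) := forall y, S1 y -> exists x, S1 x /\ f x = y.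

Lemma ci_spec f y : surjS1 f -> S1 y -> S1 (circ_inv f y) /\ f (circ_inv f y) = y.
Proof.
  intros Hs Hy. unfold circ_inv. apply epsilon_spec. apply Hs; auto.
Qed.

Lemma ci_unique f y w : injS1 f -> surjS1 f -> S1 y -> S1 w -> f w = y -> circ_inv f y = w.
Proof.
  intros Hi Hs Hy Hw Hf. destruct (ci_spec f y Hs Hy) as [H1 H2]. apply Hi; auto. congruence.
Qed.

Lemma ci_left f x : injS1 f -> surjS1 f -> mapsS1 f -> S1 x -> circ_inv f (f x) = x.
Proof. intros. apply ci_unique; auto. Qed.

Lemma ci_maps f : surjS1 f -> mapsS1 (circ_inv f).
Proof. intros Hs y Hy. apply ci_spec; auto. Qed.

Lemma iter_ci_left f n x : injS1 f -> surjS1 f -> mapsS1 f -> S1 x ->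
  Nat.iter n (circ_inv f) (Nat.iter n f x) = x.
Proof.
  intros Hi Hs Hm. revert x. induction n; intros x Hx; auto.
  rewrite Nat.iter_succ_r, Nat.iter_succ. rewrite ci_left; auto. apply iter_S1; auto.
Qed.

Lemma iter_inj f n x y : injS1 f -> mapsS1 f -> S1 x -> S1 y ->
  Nat.iter n f x = Nat.iter n f y -> x = y.
Proof.
  intros Hi Hm. revert x y. induction n; intros x y Hx Hy H; auto.
  simpl in H. apply Hi in H; try apply iter_S1; auto.
Qed.

Lemma minimal (Q : nat -> Prop) : (exists n, Q n) -> exists n, Q n /\ forall m, (m < n)%nat -> ~ Q m.
Proof.
  intros [n Hn]. apply NNPP. intros Hc.
  assert (forall k m, (m <= k)%nat -> ~ Q m).
  { induction k; intros m Hm HQ.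
    - apply Hc. exists m. split; auto. intros; lia.
    - destruct (Nat.eq_dec m (S k)).
      + subst. apply Hc. exists (S k). split; auto. intros m' Hm'. apply IHk. lia.
      + apply (IHk m); auto. lia. }
  apply (H n n); auto.
Qed.

Lemma contract_lemma (phi : R -> R) (p : nat) (J E K : R -> Prop) :
  (1 <= p)%nat -> (forall x, E x -> J x) -> (forall x, K x -> J x) -> (forall x, K x -> ~ E x) ->
  (forall x, J x -> E (Nat.iter p phi x)) ->
  (forall r, (0 < r < p)%nat -> forall x, J x -> ~ J (Nat.iter r phi x)) ->
  forall n, (1 <= n)%nat -> forall x, K x -> ~ K (Nat.iter n phi x).
Proof.
  intros Hp HEJ HKJ HKE HJE Hr.
  assert (Hq : forall q x, (1 <= q)%nat -> J x -> E (Nat.iter (p * q) phi x)).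
  { induction q; intros x Hq Hx; [lia|].
    destruct q. { rewrite Nat.mul_1_r. auto. }
    rewrite Nat.mul_succ_r, Nat.add_comm, Nat.iter_add. apply HJE, HEJ, IHq; auto. lia. }
  intros n Hn x Hx. pose proof (Nat.div_mod n p ltac:(lia)) as Hd.
  pose proof (Nat.mod_upper_bound n p ltac:(lia)) as Hm.
  set (q := (n / p)%nat) in *. set (r := (n mod p)%nat) in *.
  rewrite Hd, Nat.add_comm, Nat.iter_add.
  destruct q as [|q].
  - intros HK. rewrite Nat.mul_0_r in *. simpl in HK.
    exact (Hr r ltac:(lia) x (HKJ x Hx) (HKJ _ HK)).
  - assert (HE : E (Nat.iter (p * S q) phi x)) by (apply Hq; auto; lia).
    destruct r as [|r].
    + simpl. intros HK. apply (HKE _ HK HE).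
    + intros HK. exact (Hr (S r) ltac:(lia) _ (HEJ _ HE) (HKJ _ HK)).
Qed.

Definition Good g N e j d := forall i, (i < d)%nat -> exists e' j', Maps g i e j e' j' /\ (e' <= - N)%Z.

Definition Hyp g N := (0 <= N)%Z /\ LF g N /\ mapsS1 g /\ injS1 g /\ surjS1 g.

Lemma Good_Maps g N e j d : Hyp g N -> inS1 e j -> Good g N e j d -> exists e' j', Maps g d e j e' j'.
Proof.
  intros [HN [HL [Hm _]]] Hs HG. destruct d.
  - exists e, j. apply Maps_0.
  - destruct (HG d ltac:(lia)) as [e' [j' [HM He']]].
    pose proof (Maps_inS1 _ _ _ _ _ _ Hm HM Hs) as Hs'.
    destruct (LF_step g N e' j' HN HL Hs' He') as [k [C [_ HM1]]].
    do 2 eexists. exact (Maps_comp _ _ _ _ _ _ _ _ _ HM HM1).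
Qed.

Lemma Good_sub g N e j d e2 j2 : Good g N e j d -> Sub e2 j2 e j -> Good g N e2 j2 d.
Proof.
  intros HG HS i Hi. destruct (HG i Hi) as [e' [j' [HM He']]].
  pose proof (Sub_level _ _ _ _ HS).
  do 2 eexists. split. apply (Maps_sub _ _ _ _ _ _ _ _ HM HS). lia.
Qed.

Lemma Good_extend g N e j d e' j' : Good g N e j d -> Maps g d e j e' j' -> (e' <= - N)%Z ->
  Good g N e j (S d).
Proof.
  intros HG HM He i Hi. destruct (Nat.eq_dec i d).
  - subst. eauto.
  - apply HG. lia.
Qed.

Definition WWres g e j := inS1 e j /\ forall n, (1 <= n)%nat ->
  (forall x, I e j x -> Nat.iter n g x = x) \/ (forall x, I e j x -> ~ I e j (Nat.iter n g x)).

Lemma half_choice e j e' j' : (e' < e)%Z ->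
  exists b, (b = 0 \/ b = 1)%Z /\ forall y, I (e - 1) (2 * j + b) y -> ~ I e' j' y.
Proof.
  intros He. destruct (classic (exists y, I (e - 1) (2 * j + 0) y /\ I e' j' y)) as [Hy|Hn].
  - exists 1%Z. split; auto. intros y H1 H2.
    pose proof (nested (e - 1) (2 * j + 0) e' j' ltac:(lia) Hy y H2).
    rewrite Z.add_0_r in H. eapply half_disj; eauto.
  - exists 0%Z. split; auto. intros y H1 H2. apply Hn; eauto.
Qed.

Lemma final g N e j p e' j' : Hyp g N -> inS1 e j -> (1 <= p)%nat -> Maps g p e j e' j' ->
  (forall r, (0 < r < p)%nat -> forall x, I e j x -> ~ I e j (Nat.iter r g x)) ->
  (exists x, I e j x /\ I e j (Nat.iter p g x)) -> exists e0 j0, WWres g e0 j0.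
Proof.
  intros Hh Hs Hp HM Hr [x0 [Hx0 Hx0']].
  pose proof Hh as [HN [HL [Hm [Hi Hsu]]]].
  assert (Hint : exists y, I e j y /\ I e' j' y).
  { exists (Nat.iter p g x0). split; auto. eapply Maps_into; eauto. }
  destruct (Z.lt_trichotomy e' e) as [Hlt|[Heq|Hgt]].
  - (* contraction *)
    assert (HS : Sub e' j' e j) by (apply nested; auto; lia).
    destruct (half_choice e j e' j' Hlt) as [b [Hb HK]].
    exists (e - 1)%Z, (2 * j + b)%Z. split.
    { eapply Sub_inS1; eauto. apply half_sub; auto. }
    intros n Hn. right.
    apply (contract_lemma g p (I e j) (I e' j') (I (e - 1) (2 * j + b))); auto.
    + intros y Hy; apply (half_sub e j b Hb); auto.
    + intros y Hy; eapply Maps_into; eauto.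
  - subst e'. assert (j' = j).
    { symmetry. apply (same_level e). exact Hint. }
    subst j'.
    assert (Hid : forall x, I e j x -> Nat.iter p g x = x).
    { intros x Hx. rewrite (HM x Hx). rewrite Z.sub_diag, P_0. ring. }
    assert (Hq : forall q x, I e j x -> Nat.iter (p * q) g x = x).
    { induction q; intros x Hx. { rewrite Nat.mul_0_r. reflexivity. }
      rewrite Nat.mul_succ_r, Nat.iter_add, Hid; auto. }
    exists e, j. split; auto. intros n Hn.
    pose proof (Nat.div_mod n p ltac:(lia)) as Hd.
    pose proof (Nat.mod_upper_bound n p ltac:(lia)) as Hmd.
    set (q := (n / p)%nat) in *. set (r := (n mod p)%nat) in *.
    destruct (Nat.eq_dec r 0) as [H0|H0].
    + left. intros x Hx. rewrite Hd, Nat.add_comm, Nat.iter_add, Hq; auto. rewrite H0. reflexivity.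
    + right. intros x Hx. rewrite Hd, Nat.add_comm, Nat.iter_add, Hq; auto. apply Hr; auto. lia.
  - (* expansion: use the inverse *)
    assert (HS : Sub e j e' j') by (apply nested; auto; [lia|]; destruct Hint as [y [H1 H2]]; eauto).
    pose proof (Maps_inS1 _ _ _ _ _ _ Hm HM Hs) as Hs'.
    destruct (half_choice e' j' e j Hgt) as [b [Hb HK]].
    set (gi := circ_inv g).
    assert (Hgi : mapsS1 gi) by (apply ci_maps; auto).
    assert (HS1 : forall y, I e j y -> S1 y) by (intros; eapply inS1_S1; eauto).
    assert (HS1' : forall y, I e' j' y -> S1 y) by (intros; eapply inS1_S1; eauto).
    assert (Hc : forall n, (1 <= n)%nat -> forall x, I (e' - 1) (2 * j' + b) x ->
                   ~ I (e' - 1) (2 * j' + b) (Nat.iter n gi x)).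
    { apply (contract_lemma gi p (I e' j') (I e j) (I (e' - 1) (2 * j' + b))); auto.
      - intros y Hy; apply (half_sub e' j' b Hb); auto.
      - intros y Hy. destruct (Maps_onto _ _ _ _ _ _ _ HM Hy) as [x [Hx <-]].
        unfold gi. rewrite iter_ci_left; auto.
      - intros r Hr' y Hy Hy'. destruct (Maps_onto _ _ _ _ _ _ _ HM Hy) as [x [Hx <-]].
        assert (Hx1 : S1 x) by auto.
        replace p with (r + (p - r))%nat in Hy' by lia.
        rewrite Nat.iter_add in Hy'. unfold gi in Hy'. rewrite iter_ci_left in Hy'; auto;
          [|apply iter_S1; auto].
        destruct (Maps_onto _ _ _ _ _ _ _ HM Hy') as [x' [Hx' Hxx]].
        assert (Ep : Nat.iter p g x' = Nat.iter (p - r) g (Nat.iter r g x'))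
          by (rewrite <- Nat.iter_add; f_equal; lia).
        rewrite Ep in Hxx.
        apply iter_inj in Hxx; auto; [|apply iter_S1; auto].
        apply (Hr r Hr' x' Hx'). rewrite Hxx. auto. }
    exists (e' - 1)%Z, (2 * j' + b)%Z. split.
    { eapply Sub_inS1; eauto. apply half_sub; auto. }
    intros n Hn. right. intros z Hz Hz'.
    apply (Hc n Hn _ Hz'). unfold gi. rewrite iter_ci_left; auto.
    eapply inS1_S1; [|exact Hz]. eapply Sub_inS1; eauto. apply half_sub; auto.
Qed.

Lemma caseA g N w : Hyp g N -> inS1 (- N) w -> (forall d, Good g N (- N) w d) ->
  exists e0 j0, WWres g e0 j0.
Proof.
  intros Hh Hs HG.
  destruct (classic (exists n, (1 <= n)%nat /\ exists x, I (- N) w x /\ I (- N) w (Nat.iter n g x)))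
    as [Hex|Hno].
  - destruct (minimal _ Hex) as [p [[Hp Hx] Hmin]].
    destruct (Good_Maps g N _ _ p Hh Hs (HG p)) as [e' [j' HM]].
    eapply final; eauto.
    intros r Hr x Hx1 Hx2. apply (Hmin r); [lia|]. split; [lia|]. eauto.
  - exists (- N)%Z, w. split; auto. intros n Hn. right. intros x Hx Hx'.
    apply Hno. eauto.
Qed.

Definition Rel g N w w' := exists e j D, Sub e j (- N) w /\ (1 <= D)%nat /\
  Good g N e j D /\ Maps g D e j (- N) w'.

Lemma Rel_self g N w : Hyp g N -> inS1 (- N) w -> Rel g N w w -> exists e0 j0, WWres g e0 j0.
Proof.
  intros Hh Hs [e [j [D [HS [HD [HG HM]]]]]].
  pose proof (Sub_inS1 _ _ _ _ HS Hs) as HsT.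
  assert (HQD : (1 <= D)%nat /\ exists x, I e j x /\ I e j (Nat.iter D g x)).
  { split; auto. destruct (Maps_onto _ _ _ _ _ _ _ HM (HS _ (I_right e j))) as [x [Hx Hx']].
    exists x. split; auto. rewrite Hx'. apply I_right. }
  assert (Hex : exists n, (1 <= n)%nat /\ exists x, I e j x /\ I e j (Nat.iter n g x)) by eauto.
  destruct (minimal _ Hex) as [p [[Hp Hx] Hmin]].
  assert (HpD : (p <= D)%nat).
  { destruct (Nat.le_gt_cases p D); auto. exfalso. apply (Hmin D); auto. }
  assert (HMp : exists e' j', Maps g p e j e' j').
  { destruct (Nat.eq_dec p D). { subst. eauto. }
    destruct (HG p ltac:(lia)) as [e' [j' [H1 _]]]. eauto. }
  destruct HMp as [e' [j' HMp]].
  eapply final; eauto.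
  intros r Hr x Hx1 Hx2. apply (Hmin r); [lia|]. split; [lia|]. eauto.
Qed.

Lemma Rel_trans g N w1 w2 w3 : Rel g N w1 w2 -> Rel g N w2 w3 -> Rel g N w1 w3.
Proof.
  intros [e1 [j1 [D1 [HS1 [HD1 [HG1 HM1]]]]]] [e2 [j2 [D2 [HS2 [HD2 [HG2 HM2]]]]]].
  destruct (Maps_pull _ _ _ _ _ _ _ _ HM1 HS2) as [e [j [HS HM]]].
  exists e, j, (D2 + D1)%nat. split; [eapply Sub_trans; eauto|]. split; [lia|]. split.
  - intros i Hi. destruct (Nat.lt_ge_cases i D1).
    + destruct (HG1 i H) as [e' [j' [H1 H2]]]. pose proof (Sub_level _ _ _ _ HS).
      do 2 eexists. split. apply (Maps_sub _ _ _ _ _ _ _ _ H1 HS). lia.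
    + destruct (HG2 (i - D1)%nat ltac:(lia)) as [e' [j' [H1 H2]]].
      pose proof (Maps_comp _ _ _ _ _ _ _ _ _ HM H1).
      replace (i - D1 + D1)%nat with i in H0 by lia. eauto.
  - apply (Maps_comp _ _ _ _ _ _ _ _ _ HM HM2).
Qed.

Lemma notA_Rel g N w : Hyp g N -> inS1 (- N) w -> ~ (forall d, Good g N (- N) w d) ->
  exists w', inS1 (- N) w' /\ Rel g N w w'.
Proof.
  intros Hh Hs HnA. pose proof Hh as [HN [HL [Hm [Hinj Hsu]]]].
  apply not_all_ex_not in HnA. destruct (minimal _ HnA) as [d1 [Hd1 Hmin]].
  assert (HG1 : Good g N (- N) w 1).
  { intros i Hi. replace i with 0%nat by lia. exists (- N)%Z, w. split. apply Maps_0. lia. }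
  destruct d1 as [|d]. { exfalso. apply Hd1. intros i Hi; lia. }
  destruct d as [|d']. { contradiction. }
  set (d := S d') in *.
  assert (HGd : Good g N (- N) w d) by (apply NNPP; intro; apply (Hmin d); auto).
  destruct (Good_Maps g N _ _ d Hh Hs HGd) as [e' [j' HM]].
  assert (He' : (- N < e')%Z).
  { destruct (Z_lt_le_dec (- N) e'); auto. exfalso. apply Hd1. eapply Good_extend; eauto. }
  pose proof (Maps_inS1 _ _ _ _ _ _ Hm HM Hs) as Hs'.
  pose proof (inS1_le0 _ _ Hs').
  set (w' := (j' * 2 ^ (e' + N))%Z).
  assert (HS' : Sub (- N) w' e' j').
  { apply int_sub; [lia|]. replace (e' - - N)%Z with (e' + N)%Z by lia.
    pose proof (pow2_pos (e' + N) ltac:(lia)). unfold w'. lia. }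
  destruct (Maps_pull _ _ _ _ _ _ _ _ HM HS') as [e [j [HS HMT]]].
  exists w'. split. eapply Sub_inS1; eauto.
  exists e, j, d. split; auto. split. unfold d; lia. split; auto.
  eapply Good_sub; eauto.
Qed.

Lemma filter_len {A} (f : A -> bool) (L : list A) x : In x L -> f x = false ->
  (length (filter f L) < length L)%nat.
Proof.
  induction L; simpl; intros Hin Hf; [contradiction|].
  pose proof (filter_length_le f L).
  destruct Hin as [<-|Hin].
  - rewrite Hf. lia.
  - destruct (f a); simpl; specialize (IHL Hin Hf); lia.
Qed.

Lemma cycle_lemma (Rl : Z -> Z -> Prop) : (forall a b c, Rl a b -> Rl b c -> Rl a c) ->
  forall n (L : list Z), length L = n -> L <> nil -> (forall w, In w L -> exists w', In w' L /\ Rl w w') ->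
  exists w, In w L /\ Rl w w.
Proof.
  intros Ht n. induction n as [n IH] using (well_founded_induction lt_wf).
  intros L HL Hne Hsucc. destruct L as [|x L0]; [contradiction|].
  destruct (classic (Rl x x)). { exists x. split; simpl; auto. }
  set (f := fun w => if excluded_middle_informative (Rl x w) then true else false).
  set (L' := filter f (x :: L0)).
  assert (Hf : forall w, In w L' <-> In w (x :: L0) /\ Rl x w).
  { intros w. unfold L'. rewrite filter_In. unfold f.
    destruct (excluded_middle_informative (Rl x w)); intuition congruence. }
  assert (Hlen : (length L' < n)%nat).
  { rewrite <- HL. apply (filter_len f _ x). simpl; auto. unfold f.
    destruct (excluded_middle_informative (Rl x x)); tauto. }
  destruct (Hsucc x (or_introl eq_refl)) as [x' [Hx' Rx']].
  destruct (IH _ Hlen L' eq_refl) as [w [Hw Rw]].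
  - intros E. assert (In x' L') by (apply Hf; auto). rewrite E in H0. contradiction.
  - intros w Hw. apply Hf in Hw as [Hw Rw]. destruct (Hsucc w Hw) as [w' [Hw' Rw']].
    exists w'. split; auto. apply Hf. split; auto. eauto.
  - exists w. split; auto. apply Hf in Hw. tauto.
Qed.

Lemma inS1_range N w : (0 <= N)%Z -> inS1 (- N) w <-> (0 <= w /\ w < 2 ^ N)%Z.
Proof.
  intros HN. unfold inS1. pose proof (P_opp N) as HP. pose proof (P_pos N). pose proof (P_pos (- N)).
  rewrite (P_IZR N HN) in *. split.
  - intros [H1 H2]. split; auto. apply lt_IZR.
    assert (IZR w + 1 <= IZR (2 ^ N)).
    { apply (Rmult_le_reg_r (P (- N))); auto. rewrite Rmult_comm in HP. lra. }
    rewrite <- plus_IZR in H3. apply le_IZR in H3. apply IZR_lt. lia.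
  - intros [H1 H2]. split; auto. assert (w + 1 <= 2 ^ N)%Z by lia. apply IZR_le in H3.
    rewrite plus_IZR in H3. simpl in H3. nra.
Qed.

Theorem dyn g N : Hyp g N -> exists e0 j0, WWres g e0 j0.
Proof.
  intros Hh. pose proof Hh as [HN _].
  destruct (classic (exists w, inS1 (- N) w /\ forall d, Good g N (- N) w d)) as [[w [Hw HA]]|HnA].
  - eapply caseA; eauto.
  - assert (Hs : forall w, inS1 (- N) w -> exists w', inS1 (- N) w' /\ Rel g N w w').
    { intros w Hw. apply notA_Rel; auto. intros HA. apply HnA; eauto. }
    set (L := map Z.of_nat (seq 0 (Z.to_nat (2 ^ N)))).
    assert (HL : forall w, In w L <-> inS1 (- N) w).
    { intros w. rewrite inS1_range by auto. unfold L. rewrite in_map_iff.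
      pose proof (pow2_pos N HN). split.
      - intros [k [<- Hk]]. apply in_seq in Hk. lia.
      - intros Hw. exists (Z.to_nat w). split. lia. apply in_seq. lia. }
    destruct (cycle_lemma (Rel g N) (Rel_trans g N) _ L eq_refl) as [w [Hw Rw]].
    + intros E. assert (In 0%Z L). { apply HL. apply inS1_range; auto. pose proof (pow2_pos N HN). lia. }
      rewrite E in H. contradiction.
    + intros w Hw. apply HL in Hw. destruct (Hs w Hw) as [w' [Hw' R']]. exists w'. split; auto. apply HL; auto.
    + apply HL in Hw. eapply Rel_self; eauto.
Qed.

Definition dy (x : R) (e : Z) := exists M, x = IZR M * P e.

Lemma dy_mono x e e' : dy x e -> (e' <= e)%Z -> dy x e'.
Proof.
  intros [M ->] He. exists (M * 2 ^ (e - e'))%Z. rewrite mult_IZR, <- P_IZR by lia.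
  rewrite Rmult_assoc, <- P_add. f_equal. f_equal. lia.
Qed.

Lemma dyadic_dy x : dyadic x -> exists e, dy x e.
Proof.
  intros [m [k ->]]. exists (- Z.of_nat k)%Z. exists m. unfold Rdiv. f_equal.
  rewrite pow_powerRZ. unfold P. rewrite powerRZ_neg'. reflexivity.
Qed.

Lemma dy_dyadic x e : dy x e -> dyadic x.
Proof.
  intros HD. destruct (Z_le_gt_dec 0 e).
  - destruct HD as [M ->]. exists (M * 2 ^ e)%Z, 0%nat. rewrite mult_IZR, <- P_IZR by lia. simpl. lra.
  - destruct HD as [M ->]. exists M, (Z.to_nat (- e)). unfold Rdiv. f_equal.
    rewrite pow_powerRZ. rewrite Z2Nat.id by lia. unfold P. rewrite powerRZ_neg'.
    rewrite Rinv_inv. reflexivity.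
Qed.

Lemma bound_lemma (Q : Z -> nat -> Prop) n :
  (forall N N' i, (N <= N')%Z -> Q N i -> Q N' i) ->
  (forall i, (i < n)%nat -> exists N, Q N i) -> exists N, (0 <= N)%Z /\ forall i, (i < n)%nat -> Q N i.
Proof.
  intros Hm. induction n; intros H.
  - exists 0%Z. split; [lia|]. intros; lia.
  - destruct IHn as [N1 [HN1 H1]]. { intros; apply H; lia. }
    destruct (H n ltac:(lia)) as [N2 H2].
    exists (Z.max N1 N2). split; [lia|]. intros i Hi. destruct (Nat.eq_dec i n).
    + subst. apply (Hm N2); auto; lia.
    + apply (Hm N1); [lia| apply H1; lia].
Qed.

Lemma a_mono (a : nat -> R) n : (forall i, (i < n)%nat -> a i < a (S i)) ->
  forall i j, (i <= j <= n)%nat -> a i <= a j.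
Proof.
  intros H i j Hij. induction j.
  - replace i with 0%nat by lia. lra.
  - destruct (Nat.eq_dec i (S j)). subst; lra.
    specialize (IHj ltac:(lia)). specialize (H j ltac:(lia)). lra.
Qed.

Lemma find_piece (a : nat -> R) n x : a 0%nat = 0 -> 0 < x ->
  forall m, (m <= n)%nat -> x <= a m -> exists i, (i < m)%nat /\ a i < x <= a (S i).
Proof.
  intros H0 Hx. induction m; intros Hm Hxm.
  - lra.
  - destruct (Rle_lt_dec x (a m)).
    + destruct (IHm ltac:(lia) r) as [i [Hi Hi']]. exists i. split; auto.
    + exists m. split; auto.
Qed.

Lemma inV_Hyp g : in_V g -> exists N, Hyp g N.
Proof.
  intros [Hm [Hinj [Hs [Hd [n [a [Ha0 [Han [Hinc [Hda Hpc]]]]]]]]]].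
  set (Q := fun N i => dy (a i) (- N) /\ dy (a (S i)) (- N) /\ exists k C, forall x, a i < x <= a (S i) ->
                 g x = P k * x + IZR C * P (k - N)).
  destruct (bound_lemma Q n) as [N [HN HQ]].
  - intros N N' i HNN [H1 [H2 [k [C HC]]]]. split; [eapply dy_mono; eauto; lia|].
    split; [eapply dy_mono; eauto; lia|]. exists k, (C * 2 ^ (N' - N))%Z. intros x Hx.
    rewrite HC by auto. rewrite mult_IZR, <- P_IZR by lia. rewrite Rmult_assoc, <- P_add.
    replace (N' - N + (k - N'))%Z with (k - N)%Z by lia. reflexivity.
  - intros i Hi. destruct (Hpc i Hi) as [k [c Hc]].
    destruct (dyadic_dy _ (Hda i ltac:(lia))) as [e1 He1].
    destruct (dyadic_dy _ (Hda (S i) ltac:(lia))) as [e2 He2].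
    assert (HS1 : S1 (a (S i))).
    { pose proof (a_mono a n Hinc 0 (S i) ltac:(lia)). pose proof (a_mono a n Hinc (S i) n ltac:(lia)).
      pose proof (Hinc i Hi). pose proof (a_mono a n Hinc 0 i ltac:(lia)). split; lra. }
    destruct (dyadic_dy _ (Hd _ HS1 (Hda (S i) ltac:(lia)))) as [e3 He3].
    assert (Hc' : c = g (a (S i)) - P k * a (S i)).
    { rewrite Hc; [unfold P; ring|]. pose proof (Hinc i Hi); lra. }
    set (e := Z.min e3 (e2 + k)).
    assert (Hce : dy c e).
    { destruct (dy_mono _ _ e He3 ltac:(lia)) as [M3 E3].
      destruct (dy_mono _ _ (e - k) He2 ltac:(lia)) as [M2 E2].
      exists (M3 - M2)%Z. rewrite Hc', E3, E2, minus_IZR.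
      assert (EP : P k * P (e - k) = P e) by (rewrite <- P_add; f_equal; lia).
      rewrite <- EP. ring. }
    exists (Z.max 0 (Z.max (- e1) (Z.max (- e2) (k - e)))).
    set (N := Z.max 0 (Z.max (- e1) (Z.max (- e2) (k - e)))).
    split; [eapply dy_mono; eauto; lia|]. split; [eapply dy_mono; eauto; lia|].
    destruct (dy_mono _ _ (k - N) Hce ltac:(lia)) as [C HC].
    exists k, C. intros x Hx. rewrite Hc by auto. rewrite HC. unfold P; ring.
  - exists N. split; auto. split; [|split; [|split]]; auto.
    intros j0 Hj0. set (xr := (IZR j0 + 1) * P (- N)).
    assert (Hxr : S1 xr) by (eapply inS1_S1; eauto; apply I_right).
    destruct (find_piece a n xr Ha0 (proj1 Hxr) n (le_n n) ltac:(rewrite Han; apply Hxr)) as [i [Hi Hxi]].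
    destruct (HQ i Hi) as [[A HA] [_ [k [C HC]]]].
    exists k, C. intros x Hx. apply HC.
    assert (A <= j0)%Z.
    { assert (A < j0 + 1)%Z; [|lia]. apply (lt_real_Z _ _ (P (- N))). apply P_pos.
      rewrite plus_IZR. simpl. unfold xr in Hxi. lra. }
    destruct Hx as [Hx1 Hx2]. apply IZR_le in H. pose proof (P_pos (- N)).
    split; [|unfold xr in Hxi; lra]. rewrite HA. nra.
Qed.

Definition inVp f N := mapsS1 f /\ injS1 f /\ surjS1 f /\ (0 <= N)%Z /\ LF f N.

Lemma LF_maps f N j0 k C e j : (forall x, I (- N) j0 x -> f x = P k * x + IZR C * P (k - N)) ->
  Sub e j (- N) j0 -> Maps f 1 e j (e + k) (j + C * 2 ^ (- N - e)).
Proof.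
  intros HF HS. pose proof (Sub_level _ _ _ _ HS) as He. intros x Hx. simpl. rewrite HF by auto.
  replace (e + k - e)%Z with k by lia. rewrite plus_IZR, mult_IZR, <- P_IZR by lia.
  replace (IZR j + IZR C * P (- N - e) - IZR j) with (IZR C * P (- N - e)) by ring.
  rewrite Rmult_assoc, <- P_add. replace (- N - e + (e + k))%Z with (k - N)%Z by lia. ring.
Qed.

Lemma inVp_ext f g N : (forall x, f x = g x) -> inVp f N -> inVp g N.
Proof.
  intros E [Hm [Hi [Hs [HN HL]]]]. split; [|split; [|split; [|split]]]; auto.
  - intros x Hx; rewrite <- E; auto.
  - intros x y Hx Hy; rewrite <- !E; auto.
  - intros y Hy; destruct (Hs y Hy) as [x [Hx Hx']]; exists x; rewrite <- E; auto.
  - intros j0 Hj0; destruct (HL j0 Hj0) as [k [C HC]]; exists k, C; intros; rewrite <- E; auto.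
Qed.

Lemma inVp_comp f g Nf Ng : inVp f Nf -> inVp g Ng -> inVp (fun x => f (g x)) (Nf + Ng).
Proof.
  intros [Hmf [Hif [Hsf [HNf HLf]]]] [Hmg [Hig [Hsg [HNg HLg]]]].
  split; [intros x Hx; auto|]. split; [intros x y Hx Hy E; auto|]. split.
  { intros y Hy. destruct (Hsf y Hy) as [z [Hz <-]]. destruct (Hsg z Hz) as [x [Hx <-]]. eauto. }
  split; [lia|].
  intros j0 Hj0. set (N := (Nf + Ng)%Z) in *.
  destruct (contain_level (- N) j0 (- Ng) Hj0 ltac:(lia) ltac:(lia)) as [j1 [HS1 Hj1]].
  destruct (HLg j1 Hj1) as [k [C HC]].
  pose proof (LF_maps g Ng j1 k C (- Ng) j1 HC (Sub_refl _ _)) as HMbig.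
  pose proof (inS1_le0 _ _ (Maps_inS1 _ _ _ _ _ _ Hmg HMbig Hj1)) as Hk.
  pose proof (LF_maps g Ng j1 k C (- N) j0 HC HS1) as HM.
  set (jj := (j0 + C * 2 ^ (- Ng - - N))%Z) in *.
  pose proof (Maps_inS1 _ _ _ _ _ _ Hmg HM Hj0) as Hjj.
  destruct (contain_level (- N + k) jj (- Nf) Hjj ltac:(lia) ltac:(lia)) as [j2 [HS2 Hj2]].
  destruct (HLf j2 Hj2) as [k' [C' HC']].
  exists (k + k')%Z, (C * 2 ^ Nf + C' * 2 ^ (Ng - k))%Z. intros x Hx.
  pose proof (Maps_into _ _ _ _ _ _ _ HM Hx) as Hgx. simpl in Hgx.
  rewrite (HC' _ (HS2 _ Hgx)). rewrite (HC x (HS1 x Hx)).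
  rewrite plus_IZR, !mult_IZR, <- !P_IZR by lia.
  assert (E1 : P k' * P k = P (k + k')) by (rewrite <- P_add; f_equal; lia).
  assert (E2 : P k' * P (k - Ng) = P Nf * P (k + k' - N)) by (rewrite <- !P_add; f_equal; unfold N; lia).
  assert (E3 : P (k' - Nf) = P (Ng - k) * P (k + k' - N)) by (rewrite <- !P_add; f_equal; unfold N; lia).
  rewrite E3. rewrite Rmult_plus_distr_l, <- Rmult_assoc, E1, <- Rmult_assoc, (Rmult_comm (P k') (IZR C)),
    Rmult_assoc, E2. ring.
Qed.

Lemma inVp_id : inVp (fun x => x) 0.
Proof.
  split; [|split; [|split; [|split]]].
  - intros x Hx; auto.
  - intros x y _ _ E; auto.
  - intros y Hy; exists y; auto.
  - lia.
  - intros j0 _. exists 0%Z, 0%Z. intros x _. rewrite P_0. simpl. lra.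
Qed.

Lemma inVp_iter f N n : inVp f N -> exists N', inVp (Nat.iter n f) N'.
Proof.
  intros Hf. induction n.
  - exists 0%Z. apply (inVp_ext (fun x => x)); auto. apply inVp_id.
  - destruct IHn as [N' HN']. exists (N + N')%Z. apply (inVp_ext (fun x => f (Nat.iter n f x))); auto.
    apply inVp_comp; auto.
Qed.

Lemma inVp_inV f N : inVp f N -> in_V f.
Proof.
  intros [Hm [Hi [Hs [HN HL]]]]. split; auto. split; auto. split; auto. split.
  - intros x Hx Hd. destruct (contain (- N) x ltac:(lia) Hx) as [j0 [Hx0 Hj0]].
    destruct (HL j0 Hj0) as [k [C HC]]. rewrite (HC x Hx0).
    destruct (dyadic_dy x Hd) as [e [M HM]].
    apply (dy_dyadic _ (Z.min (k + e) (k - N))).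
    destruct (dy_mono (P k * x) (k + e) (Z.min (k + e) (k - N))) as [M1 E1].
    { exists M. rewrite HM, P_add. ring. } { lia. }
    destruct (dy_mono (IZR C * P (k - N)) (k - N) (Z.min (k + e) (k - N))) as [M2 E2].
    { exists C. ring. } { lia. }
    exists (M1 + M2)%Z. rewrite E1, E2, plus_IZR. ring.
  - exists (Z.to_nat (2 ^ N)), (fun i => INR i * P (- N)).
    pose proof (pow2_pos N HN). pose proof (P_opp N). pose proof (P_pos (- N)).
    split; [simpl; lra|]. split.
    { rewrite INR_IZR_INZ, Z2Nat.id by lia. rewrite <- P_IZR by lia. lra. }
    split. { intros i Hi0. rewrite S_INR. lra. }
    split. { intros i Hi0. apply (dy_dyadic _ (- N)). exists (Z.of_nat i). rewrite INR_IZR_INZ. auto. }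
    intros i Hi0. assert (Hin : inS1 (- N) (Z.of_nat i)) by (apply inS1_range; lia).
    destruct (HL _ Hin) as [k [C HC]]. exists k, (IZR C * P (k - N)). intros x Hx.
    apply HC. unfold I. rewrite S_INR, INR_IZR_INZ in Hx. lra.
Qed.

Definition rot (r x : R) : R := if Rle_dec x (1 - r) then x + r else x + r - 1.

Lemma rot_inVp M R0 : (0 <= M)%Z -> (0 <= R0 < 2 ^ M)%Z -> inVp (rot (IZR R0 * P (- M))) M.
Proof.
  intros HM HR. set (r := IZR R0 * P (- M)).
  pose proof (P_opp M). pose proof (P_pos (- M)). rewrite (P_IZR M HM) in H.
  assert (Hr0 : 0 <= r) by (unfold r; assert (0 <= R0)%Z as HR0 by lia; apply IZR_le in HR0; nra).
  assert (Hr1 : r + P (- M) <= 1).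
  { unfold r. assert (R0 + 1 <= 2 ^ M)%Z by lia. apply IZR_le in H1. rewrite plus_IZR in H1. simpl in H1. nra. }
  unfold rot. split; [|split; [|split; [|split]]].
  - intros x [Hx1 Hx2]. destruct (Rle_dec x (1 - r)); split; lra.
  - intros x y [Hx1 Hx2] [Hy1 Hy2]. destruct (Rle_dec x (1 - r)), (Rle_dec y (1 - r)); lra.
  - intros y [Hy1 Hy2]. destruct (Rle_dec y r).
    + exists (y + 1 - r). split. split; lra. destruct (Rle_dec (y + 1 - r) (1 - r)); lra.
    + exists (y - r). split. split; lra. destruct (Rle_dec (y - r) (1 - r)); lra.
  - auto.
  - intros j0 Hj0. apply inS1_range in Hj0; auto.
    destruct (Z_le_gt_dec (j0 + 1) (2 ^ M - R0)).
    + exists 0%Z, R0. intros x [Hx1 Hx2]. rewrite P_0. replace (0 - M)%Z with (- M)%Z by lia.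
      destruct (Rle_dec x (1 - r)); [fold r; lra|]. exfalso.
      apply IZR_le in l. rewrite plus_IZR, minus_IZR in l. simpl in l.
      assert ((IZR j0 + 1) * P (- M) <= 1 - r) by (unfold r; nra). lra.
    + exists 0%Z, (R0 - 2 ^ M)%Z. intros x [Hx1 Hx2]. rewrite P_0. replace (0 - M)%Z with (- M)%Z by lia.
      rewrite minus_IZR.
      destruct (Rle_dec x (1 - r)).
      * exfalso. assert (2 ^ M - R0 <= j0)%Z by lia. apply IZR_le in H1. rewrite minus_IZR in H1.
        assert (1 - r <= IZR j0 * P (- M)) by (unfold r; nra). lra.
      * unfold r. nra.
Qed.

Definition sig (x : R) : R :=
  if Rle_dec x (1/2) then x / 2 else if Rle_dec x (3/4) then x - 1/4 else 2 * x - 1.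

Lemma P_m1 : P (-1) = 1/2.
Proof. unfold P. simpl. lra. Qed.
Lemma P_m2 : P (-2) = 1/4.
Proof. unfold P. simpl. lra. Qed.

Lemma P_m2' : P (Z.opp 2) = 1/4.
Proof. exact P_m2. Qed.

Lemma sig_inVp : inVp sig 2.
Proof.
  unfold sig. split; [|split; [|split; [|split]]].
  - intros x [Hx1 Hx2]. destruct (Rle_dec x (1/2)); [|destruct (Rle_dec x (3/4))]; split; lra.
  - intros x y [Hx1 Hx2] [Hy1 Hy2].
    destruct (Rle_dec x (1/2)); [|destruct (Rle_dec x (3/4))];
    destruct (Rle_dec y (1/2)); try destruct (Rle_dec y (3/4)); lra.
  - intros y [Hy1 Hy2]. destruct (Rle_dec y (1/4)); [|destruct (Rle_dec y (1/2))].
    + exists (2 * y). split; [split; lra|]. destruct (Rle_dec (2 * y) (1/2)); lra.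
    + exists (y + 1/4). split; [split; lra|].
      destruct (Rle_dec (y + 1/4) (1/2)); [lra|]. destruct (Rle_dec (y + 1/4) (3/4)); lra.
    + exists ((y + 1) / 2). split; [split; lra|].
      destruct (Rle_dec ((y + 1) / 2) (1/2)); [lra|]. destruct (Rle_dec ((y + 1) / 2) (3/4)); lra.
  - lia.
  - intros j0 Hj0. apply inS1_range in Hj0; [|lia]. replace (2 ^ 2)%Z with 4%Z in Hj0 by reflexivity.
    pose proof P_m1. pose proof P_m2.
    assert (j0 = 0 \/ j0 = 1 \/ j0 = 2 \/ j0 = 3)%Z as Hc by lia.
    destruct Hc as [ -> | [ -> | [ -> | -> ] ] ]; unfold I; rewrite P_m2'; simpl.
    + exists (-1)%Z, 0%Z. intros x Hx. rewrite H. destruct (Rle_dec x (1/2)); lra.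
    + exists (-1)%Z, 0%Z. intros x Hx. rewrite H. destruct (Rle_dec x (1/2)); lra.
    + exists 0%Z, (-1)%Z. intros x Hx. rewrite P_0. replace (0 - 2)%Z with (-2)%Z by lia. rewrite H0.
      destruct (Rle_dec x (1/2)); [lra|]. destruct (Rle_dec x (3/4)); lra.
    + exists 1%Z, (-2)%Z. intros x Hx. rewrite P_1. replace (1 - 2)%Z with (-1)%Z by lia. rewrite H.
      destruct (Rle_dec x (1/2)); [lra|]. destruct (Rle_dec x (3/4)); lra.
Qed.

Lemma sig_shrink t x : (2 <= t)%Z -> S1 x -> x <= 1 - P (- t) -> sig x <= 1 - P (- (t - 1)).
Proof.
  intros Ht [Hx1 Hx2] Hx. pose proof (P_le (- t) (- 1 - 0) ltac:(lia)).
  assert (P (- t) * 2 = P (- (t - 1))) by (rewrite <- P_1, <- P_add; f_equal; lia).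
  pose proof (P_le (- (t - 1)) (-1) ltac:(lia)). rewrite P_m1 in H1.
  unfold sig. destruct (Rle_dec x (1/2)); [lra|]. destruct (Rle_dec x (3/4)); lra.
Qed.

Lemma sig_half s x : (1 <= s)%Z -> 0 < x <= P (- s) -> 0 < sig x <= P (- s - 1).
Proof.
  intros Hs Hx. pose proof (P_le (- s) (-1) ltac:(lia)). rewrite P_m1 in H.
  assert (P (- s - 1) * 2 = P (- s)) by (rewrite <- P_1, <- P_add; f_equal; lia).
  unfold sig. destruct (Rle_dec x (1/2)); lra.
Qed.

Lemma build_g e j m h : inS1 e j -> inS1 (- m) h -> (1 <= m)%Z ->
  exists g, in_V g /\ forall x, S1 x -> ~ I (- m) h x -> I e j (g x).
Proof.
  intros Hej Hmh Hm.
  pose proof (inS1_le0 _ _ Hej) as He.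
  pose proof Hmh as Hmh'. apply inS1_range in Hmh'; [|lia].
  pose proof Hej as Hej'. replace e with (- (- e))%Z in Hej' by lia. apply inS1_range in Hej'; [|lia].
  set (r1 := IZR (2 ^ m - h - 1) * P (- m)).
  set (r2 := IZR j * P e).
  set (T := (Z.to_nat (- e) + Z.to_nat (m - 1))%nat).
  exists (fun x => rot r2 (Nat.iter T sig (rot r1 x))). split.
  - pose proof (rot_inVp m (2 ^ m - h - 1) ltac:(lia) ltac:(lia)) as H1.
    pose proof (rot_inVp (- e) j ltac:(lia) ltac:(lia)) as H2.
    replace (- - e)%Z with e in H2 by lia.
    destruct (inVp_iter sig 2 T sig_inVp) as [N' HN'].
    pose proof (inVp_comp _ _ _ _ HN' H1) as H3.
    pose proof (inVp_comp _ _ _ _ H2 H3) as H4.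
    eapply inVp_inV; eauto.
  - intros x Hx HxH.
    pose proof (P_pos (- m)). pose proof (P_opp m). rewrite (P_IZR m) in H0 by lia.
    assert (Hy : S1 (rot r1 x) /\ rot r1 x <= 1 - P (- m)).
    { destruct Hmh as [Hh1 Hh2]. apply IZR_le in Hh1.
      assert (Hr1 : r1 = 1 - (IZR h + 1) * P (- m)).
      { unfold r1. rewrite !minus_IZR. simpl. rewrite Rmult_comm in H0. nra. }
      unfold I in HxH. destruct Hx as [Hx1 Hx2]. unfold rot.
      destruct (Rle_dec x (1 - r1)).
      - assert (x <= IZR h * P (- m)) by (apply Rnot_lt_le; intro; apply HxH; split; lra).
        split; [split|]; nra.
      - split; [split|]; nra. }
    set (y := rot r1 x) in *. destruct Hy as [Hy1 Hy2].
    assert (Hn : forall n : nat, (Z.of_nat n <= m - 1)%Z ->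
               S1 (Nat.iter n sig y) /\ Nat.iter n sig y <= 1 - P (- (m - Z.of_nat n))).
    { induction n; intros Hn.
      - simpl. replace (m - 0)%Z with m by lia. auto.
      - destruct IHn as [IH1 IH2]; [lia|]. rewrite Nat.iter_succ. split.
        + destruct sig_inVp as [Hs _]. apply Hs; auto.
        + replace (- (m - Z.of_nat (S n)))%Z with (- ((m - Z.of_nat n) - 1))%Z by lia.
          apply sig_shrink; auto. lia. }
    destruct (Hn (Z.to_nat (m - 1)) ltac:(lia)) as [Hz1 Hz2].
    replace (- (m - Z.of_nat (Z.to_nat (m - 1))))%Z with (-1)%Z in Hz2 by lia.
    rewrite P_m1 in Hz2.
    set (z := Nat.iter (Z.to_nat (m - 1)) sig y) in *.
    assert (Hs : forall s : nat, 0 < Nat.iter s sig z <= P (- 1 - Z.of_nat s)).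
    { induction s.
      - assert (E0 : (-1 - Z.of_nat 0 = -1)%Z) by reflexivity. rewrite E0, P_m1. simpl. destruct Hz1; lra.
      - rewrite Nat.iter_succ. replace (-1 - Z.of_nat (S s))%Z with (- (1 + Z.of_nat s) - 1)%Z by lia.
        apply sig_half; [lia|]. replace (- (1 + Z.of_nat s))%Z with (-1 - Z.of_nat s)%Z by lia. auto. }
    unfold T. rewrite Nat.iter_add. fold z.
    destruct (Hs (Z.to_nat (- e))) as [Hw1 Hw2].
    replace (-1 - Z.of_nat (Z.to_nat (- e)))%Z with (e - 1)%Z in Hw2 by lia.
    pose proof (P_le (e - 1) e ltac:(lia)).
    set (w := Nat.iter (Z.to_nat (- e)) sig z) in *.
    destruct Hej as [Hj1 Hj2]. apply IZR_le in Hj1.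
    assert (w <= 1 - r2) by (unfold r2; lra).
    unfold rot. destruct (Rle_dec w (1 - r2)); [|lra].
    unfold I, r2. split; lra.
Qed.

Lemma iter_ci_right f n z : surjS1 f -> S1 z -> Nat.iter n f (Nat.iter n (circ_inv f) z) = z.
Proof.
  intros Hs. revert z. induction n; intros z Hz; auto.
  rewrite Nat.iter_succ_r, Nat.iter_succ. destruct (ci_spec f (Nat.iter n (circ_inv f) z) Hs) as [_ E].
  { apply iter_S1; auto. apply ci_maps; auto. }
  rewrite E. auto.
Qed.

Lemma ci_r f y : surjS1 f -> S1 y -> f (circ_inv f y) = y.
Proof. intros; apply ci_spec; auto. Qed.

Lemma inV_bij f : in_V f -> mapsS1 f /\ injS1 f /\ surjS1 f.
Proof. intros [H1 [H2 [H3 _]]]. auto. Qed.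

Lemma conj_pos gam g p x : in_V gam -> in_V g -> S1 x ->
  Nat.iter p (conjV gam g) x = circ_inv g (Nat.iter p gam (g x)).
Proof.
  intros Hgam Hg Hx. destruct (inV_bij _ Hgam) as [Hm1 [Hi1 Hs1]]. destruct (inV_bij _ Hg) as [Hm2 [Hi2 Hs2]].
  induction p.
  - simpl. rewrite ci_left; auto.
  - rewrite !Nat.iter_succ, IHp. unfold conjV. f_equal. f_equal.
    apply ci_spec; auto. apply iter_S1; auto.
Qed.

Lemma conj_inv gam g y : in_V gam -> in_V g -> S1 y ->
  circ_inv (conjV gam g) y = circ_inv g (circ_inv gam (g y)).
Proof.
  intros Hgam Hg Hy. destruct (inV_bij _ Hgam) as [Hm1 [Hi1 Hs1]]. destruct (inV_bij _ Hg) as [Hm2 [Hi2 Hs2]].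
  assert (Hmc : mapsS1 (conjV gam g)) by (intros x Hx; unfold conjV; apply ci_maps; auto).
  assert (Hic : injS1 (conjV gam g)).
  { intros a b Ha Hb E. unfold conjV in E.
    assert (g (circ_inv g (gam (g a))) = g (circ_inv g (gam (g b)))) by congruence.
    rewrite !(ci_r g _ Hs2) in H by auto. apply Hi1 in H; auto. }
  assert (Hw : S1 (circ_inv g (circ_inv gam (g y)))) by (apply ci_maps; auto; apply ci_maps; auto).
  assert (Ec : conjV gam g (circ_inv g (circ_inv gam (g y))) = y).
  { unfold conjV. rewrite (ci_r g _ Hs2) by (apply ci_maps; auto).
    rewrite (ci_r gam _ Hs1) by auto. apply ci_left; auto. }
  apply ci_unique; auto.
  intros z Hz. exists (circ_inv g (circ_inv gam (g z))). split.
  - apply ci_maps; auto; apply ci_maps; auto.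
  - unfold conjV. rewrite (ci_r g _ Hs2) by (apply ci_maps; auto).
    rewrite (ci_r gam _ Hs1) by auto. apply ci_left; auto.
Qed.

Lemma conj_neg gam g p x : in_V gam -> in_V g -> S1 x ->
  Nat.iter p (circ_inv (conjV gam g)) x = circ_inv g (Nat.iter p (circ_inv gam) (g x)).
Proof.
  intros Hgam Hg Hx. destruct (inV_bij _ Hgam) as [Hm1 [Hi1 Hs1]]. destruct (inV_bij _ Hg) as [Hm2 [Hi2 Hs2]].
  induction p.
  - simpl. rewrite ci_left; auto.
  - rewrite !Nat.iter_succ, IHp. rewrite conj_inv; auto.
    + f_equal. f_equal. apply ci_spec; auto. apply iter_S1; auto. apply ci_maps; auto.
    + apply ci_maps; auto. apply iter_S1; auto. apply ci_maps; auto.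
Qed.

Lemma pow_gt n : INR n < 2 ^ n.
Proof. induction n. simpl; lra. rewrite S_INR. simpl. pose proof (pos_INR n). pose proof (pow_R1_Rle 2 n ltac:(lra)). lra. Qed.

Theorem corollary4p4 (gamma : R -> R) (A : R -> Prop) :
  in_V gamma ->
  circle_closed A ->
  (exists x, S1 x /\ ~ A x) ->
  exists g : R -> R, in_V g /\ weakly_wandering (conjV gamma g) A.
Proof.
  intros Hgam [HA1 HA2] [x0 [Hx0 Hx0A]].
  destruct (inV_Hyp _ Hgam) as [N Hh].
  destruct (dyn _ _ Hh) as [e0 [j0 [Hej HW]]].
  assert (Heps : exists eps, eps > 0 /\ forall y, A y -> eps <= cdist x0 y).
  { apply NNPP. intros Hc. apply Hx0A. apply HA2; auto. intros eps Heps.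
    apply NNPP. intros Hc2. apply Hc. exists eps. split; auto. intros y Hy.
    apply Rnot_lt_le. intros Hlt. apply Hc2. eauto. }
  destruct Heps as [eps [Heps HAe]].
  destruct (archimed (/ eps)) as [Ar _].
  set (n := Z.to_nat (up (/ eps))).
  assert (Hn : / eps < INR n).
  { unfold n. rewrite INR_IZR_INZ, Z2Nat.id; auto. apply le_IZR. pose proof (Rinv_0_lt_compat eps Heps). lra. }
  set (m := (Z.of_nat n + 1)%Z).
  assert (Hpm : P (- m) < eps).
  { pose proof (pow_gt n). rewrite pow_powerRZ in H. fold (P (Z.of_nat n)) in H.
    pose proof (P_opp (Z.of_nat n)). pose proof (P_le (- m) (- Z.of_nat n) ltac:(unfold m; lia)).
    pose proof (P_pos (- Z.of_nat n)). pose proof (P_pos (Z.of_nat n)).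
    assert (P (- Z.of_nat n) < eps); [|lra].
    assert (1 < eps * P (Z.of_nat n)).
    { apply (Rmult_lt_reg_l (/ eps)). apply Rinv_0_lt_compat; auto.
      rewrite <- Rmult_assoc, Rinv_l by lra. lra. }
    nra. }
  destruct (contain (- m) x0 ltac:(unfold m; lia) Hx0) as [h [Hxh Hh']].
  destruct (build_g e0 j0 m h Hej Hh' ltac:(unfold m; lia)) as [g [Hg Hgm]].
  exists g. split; auto.
  assert (HgA : forall x, A x -> I e0 j0 (g x)).
  { intros x Hx. apply Hgm; auto. intros HI. apply HAe in Hx.
    unfold cdist in Hx. pose proof (Rmin_l (Rabs (x0 - x)) (1 - Rabs (x0 - x))).
    destruct HI, Hxh. assert (Rabs (x0 - x) < P (- m)) by (apply Rabs_def1; lra). lra. }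
  destruct (inV_bij _ Hgam) as [Hm1 [Hi1 Hs1]]. destruct (inV_bij _ Hg) as [Hm2 [Hi2 Hs2]].
  assert (HK : forall y, I e0 j0 y -> S1 y) by (intros y Hy; exact (inS1_S1 _ _ _ Hej Hy)).
  intros z. destruct z as [|p|p]; simpl.
  - left. auto.
  - destruct (HW (Pos.to_nat p) ltac:(lia)) as [Hfix|Hdis].
    + left. intros x Hx. rewrite conj_pos; auto. rewrite Hfix by auto. apply ci_left; auto.
    + right. intros x Hx Hy. rewrite conj_pos in Hy; auto. apply HgA in Hy.
      rewrite (ci_r g _ Hs2) in Hy by (apply iter_S1; auto).
      apply (Hdis (g x)); auto.
  - destruct (HW (Pos.to_nat p) ltac:(lia)) as [Hfix|Hdis].
    + left. intros x Hx. rewrite conj_neg; auto.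
      rewrite <- (Hfix (g x)) at 1 by auto. rewrite iter_ci_left; auto. apply ci_left; auto.
    + right. intros x Hx Hy. rewrite conj_neg in Hy; auto. apply HgA in Hy.
      rewrite (ci_r g _ Hs2) in Hy by (apply iter_S1; auto; apply ci_maps; auto).
      apply (Hdis _ Hy). rewrite iter_ci_right; auto.
Qed.
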